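(* Let $P$ be an irreducible transition matrix on the finite set $S$, reversible with respect to $\pi$, with eigenvalues $\lambda_1=1$ and $\lambda_2,\dots,\lambda_n\le0$. Then $P$ efficiency-dominates $\Pi$, the transition matrix given by $\Pi(x,y)=\pi(y)$ for all $x,y\in S$ (i.i.d. sampling from $\pi$).
   Context: $S$ is a finite set with $|S|=n$, and $\pi$ is a probability distribution on $S$ with $\pi(x)>0$ for all $x$. A transition matrix $P$ is reversible with respect to $\pi$ if $\pi(x)P(x,y)=\pi(y)P(y,x)$ for all $x,y$ (its eigenvalues are then real); irreducible if every state can be reached from every other with positive probability in some number of steps. For a Markov chain $X_1,X_2,\dots$ with transition matrix $P$ and $X_1\sim\pi$, $v(f,P)=\lim_{N\to\infty}\frac1N\mathrm{Var}\big(\sum_{i=1}^N f(X_i)\big)$. $P$ efficiency-dominates $Q$ if $v(f,P)\le v(f,Q)$ for all $f:S\to\mathbb R$. *)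

(* Defs.v *)
From HB Require Import structures.
From mathcomp Require Import all_boot all_order all_algebra.
From mathcomp Require Import all_classical all_reals all_analysis.

Set Implicit Arguments.
Unset Strict Implicit.
Unset Printing Implicit Defensive.

Import Order.TTheory GRing.Theory Num.Theory numFieldNormedType.Exports.
Local Open Scope classical_set_scope.
Local Open Scope ring_scope.

Section MarkovDefs.
Variable R : realType.
Variable n : nat.

Definition prob_dist (pi : 'I_n -> R) : Prop :=
  (forall x, 0 < pi x) /\ \sum_x pi x = 1.

Definition stochastic (P : 'M[R]_n) : Prop :=
  (forall x y, 0 <= P x y) /\ (forall x, \sum_y P x y = 1).

Definition reversible (pi : 'I_n -> R) (P : 'M[R]_n) : Prop :=
  forall x y, pi x * P x y = pi y * P y x.

Definition irreducible (P : 'M[R]_n) : Prop :=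
  forall x y, exists k : nat, 0 < (P ^+ k) x y.

Definition iid_matrix (pi : 'I_n -> R) : 'M[R]_n := \matrix_(x, y) pi y.

Definition eigen_spectrum (P : 'M[R]_n) (lam : 'I_n -> R) : Prop :=
  char_poly P = \prod_(i < n) ('X - (lam i)%:P).

(* Law of the trajectory (X_1,...,X_N) of the chain with X_1 ~ pi. *)
Fixpoint chain_weight (P : 'M[R]_n) (x : 'I_n) (s : seq 'I_n) : R :=
  match s with
  | [::] => 1
  | y :: s' => P x y * chain_weight P y s'
  end.

Definition path_prob (pi : 'I_n -> R) (P : 'M[R]_n) (s : seq 'I_n) : R :=
  match s with
  | [::] => 1
  | x :: s' => pi x * chain_weight P x s'
  end.

Definition expect (pi : 'I_n -> R) (P : 'M[R]_n) (N : nat)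
    (g : seq 'I_n -> R) : R :=
  \sum_(t : N.-tuple 'I_n) path_prob pi P t * g t.

Definition partial_sum (f : 'I_n -> R) (s : seq 'I_n) : R :=
  \sum_(x <- s) f x.

Definition var_sum (pi : 'I_n -> R) (P : 'M[R]_n) (f : 'I_n -> R) (N : nat) : R :=
  expect pi P N (fun s => partial_sum f s ^+ 2)
  - (expect pi P N (partial_sum f)) ^+ 2.

Definition has_asymp_var (pi : 'I_n -> R) (P : 'M[R]_n) (f : 'I_n -> R) (v : R)
  : Prop :=
  (fun N : nat => var_sum pi P f N / N%:R) @ \oo --> v.

Definition eff_dominates (pi : 'I_n -> R) (P Q : 'M[R]_n) : Prop :=
  forall f : 'I_n -> R, exists vP vQ : R,
    [/\ has_asymp_var pi P f vP, has_asymp_var pi Q f vQ & vP <= vQ].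

End MarkovDefs.

(* Main.v *)
Require Import Defs.
From HB Require Import structures.
From mathcomp Require Import all_boot all_order all_algebra.
From mathcomp Require Import all_classical all_reals all_analysis.
From mathcomp Require Import complex.
From mathcomp Require Import ring lra.
Import Order.TTheory GRing.Theory Num.Theory numFieldNormedType.Exports.
Local Open Scope ring_scope.
Section ComplexPart.
Local Open Scope sesquilinear_scope.

Lemma rc_real (R : realType) (r : R) : (r%:C)%C \is Num.real.
Proof.
rewrite realE; case: (real_ge0P (num_real r)) => [h|h].
  by rewrite ler0c h.
apply/orP; right. have -> : (0 : R[i]) = (0%:C)%C by [].
by rewrite lecR ltW.
Qed.

Lemma rc_conj (R : realType) (r : R) : Num.conj ((r%:C)%C : R[i]) = (r%:C)%C.
Proof. exact: conj_Creal (rc_real _ r). Qed.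

Lemma real_rc (R : realType) (x : R[i]) : x \is Num.real -> x = ((complex.Re x)%:C)%C.
Proof. by move=> xr; rewrite complexRe; apply/esym/Creal_ReP. Qed.

Lemma char_poly_sim (F : comUnitRingType) n (A V U : 'M[F]_n) :
  V *m U = 1%:M -> char_poly (V *m A *m U) = char_poly A.
Proof.
move=> VU.
rewrite /char_poly.
have -> : char_poly_mx (V *m A *m U) =
   map_mx polyC V *m char_poly_mx A *m map_mx polyC U.
  rewrite /char_poly_mx !map_mxM mulmxBr mulmxBl; congr (_ - _).
  by rewrite scalar_mxC -mulmxA -map_mxM VU map_mx1 mulmx1.
rewrite det_mulmx det_mulmx mulrAC -det_mulmx -map_mxM.
by rewrite VU map_mx1 det1 mul1r.
Qed.

Lemma map_mxX (R : realType) n (S : 'M[R]_n) k :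
  map_mx (real_complex R) (S ^+ k) = (map_mx (real_complex R) S) ^+ k.
Proof.
elim: k => [|k IH]; first by rewrite !expr0 map_mx1.
by rewrite !exprS -!mulmxE map_mxM IH.
Qed.

Lemma sym_decomp (R : realType) n (S : 'M[R]_n) (u eps : 'rV[R]_n) :
  S^T = S -> eps *m S = eps -> eps != 0 -> u *m eps^T = 0 ->
  exists (w e : 'I_n -> R), [/\ (forall j, 0 <= w j),
     char_poly S = \prod_j ('X - (e j)%:P),
     (forall k, (u *m S ^+ k *m u^T) 0 0 = \sum_j w j * e j ^+ k) &
     (forall j, e j = 1 -> (forall j', j' != j -> e j' != 1) -> w j = 0)].
Proof.
move=> Ssym epsS eps0 ueps.
pose Sc := map_mx (real_complex R) S.
have Sc_real : Sc \is a realmx by apply/mxOverP => i j; rewrite mxE rc_real.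
have Sc_sym : Sc \is symmetricmx.
  apply/is_hermitianmxP; rewrite expr0 scale1r; apply/matrixP => i j.
  rewrite !mxE; have := congr1 (fun M : 'M[R]_n => M j i) Ssym; rewrite mxE /= => ->.
  by [].
have Sc_herm := realsym_hermsym Sc_sym Sc_real.
have Sc_norm := hermitian_normalmx Sc_herm.
pose U := spectralmx Sc; pose d := spectral_diag Sc.
have Uu : U \is unitarymx := spectral_unitarymx Sc.
have SE : Sc = U^t* *m diag_mx d *m U.
  by rewrite -invmx_unitary //; exact/orthomx_spectralP.
have UUt : U *m U^t* = 1%:M := unitarymxP Uu.
have UtU : U^t* *m U = 1%:M := mulmx1C UUt.
have dreal : forall j, d 0 j \is Num.real.
  by move=> j; exact: (mxOverP (hermitian_spectral_diag_real Sc_herm) 0 j).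
pose e j := complex.Re (d 0 j).
have de : forall j, d 0 j = ((e j)%:C)%C by move=> j; apply: real_rc.
have Spow : forall k, Sc ^+ k = U^t* *m diag_mx (\row_j (d 0 j ^+ k)) *m U.
  elim=> [|k IH].
    rewrite expr0.
    have -> : diag_mx (\row_j (d 0 j ^+ 0)) = 1%:M.
      by apply/matrixP=> i j; rewrite !mxE expr0.
    by rewrite mulmx1 UtU.
  rewrite exprS -mulmxE IH {1}SE -!mulmxA (mulmxA U) UUt mul1mx.
  rewrite !mulmxA -(mulmxA _ (diag_mx d)) mulmx_diag; congr (_ *m _ *m _).
  by congr diag_mx; apply/rowP => j; rewrite !mxE exprS.
have cpS : char_poly S = \prod_j ('X - (e j)%:P).
  apply: (map_poly_inj (real_complex R)).
  rewrite map_char_poly map_prod_XsubC -/Sc SE char_poly_sim //.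
  rewrite char_poly_trig ?diag_mx_is_trig //.
  by apply: eq_bigr => j _; rewrite mxE eqxx mulr1n de.
pose uc := map_mx (real_complex R) u.
have [z zE] : {z : 'cV_n | z = U *m uc^T} by exists (U *m uc^T).
pose w j := complex.Re (z j 0 * (z j 0)^*).
have wE : forall j, ((w j)%:C)%C = z j 0 * (z j 0)^*.
  by move=> j; rewrite /w; apply/esym/real_rc/ger0_real/mul_conjC_ge0.
have w0 : forall j, 0 <= w j by move=> j; rewrite -ler0c wE mul_conjC_ge0.
have uUt : forall j, (uc *m U^t*) 0 j = (z j 0)^*.
  move=> j; rewrite zE !mxE rmorph_sum; apply: eq_bigr => x _.
  by rewrite !mxE rmorphM /= rc_conj mulrC.
exists w, e; split => //.
  move=> k; apply: (@complexI R).
  transitivity ((map_mx (real_complex R) (u *m S ^+ k *m u^T)) 0 0).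
    by rewrite [RHS]mxE.
  rewrite !map_mxM map_mxX -map_trmx -/Sc -/uc Spow rmorph_sum.
  have -> : uc *m (U^t* *m diag_mx (\row_j (d 0 j ^+ k)) *m U) *m uc^T
      = (uc *m U^t*) *m diag_mx (\row_j (d 0 j ^+ k)) *m z by rewrite zE !mulmxA.
  move: (uc *m U^t*) uUt => A uUt'.
  rewrite mul_mx_diag !mxE; apply: eq_bigr => j _.
  rewrite !mxE uUt' rmorphM rmorphXn /= wE -de; ring.
move=> j ej1 uniq.
pose epsc := map_mx (real_complex R) eps.
have epsSc : epsc *m Sc = epsc by rewrite -map_mxM epsS.
pose y := epsc *m U^t*.
have yD : y *m diag_mx d = y.
  rewrite /y -{2}epsSc SE !mulmxA -(mulmxA _ U) UUt mulmx1 //.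
have yj : forall j', j' != j -> y 0 j' = 0.
  move=> j' ne; have := congr1 (fun M : 'rV[R[i]]_n => M 0 j') yD.
  rewrite mul_mx_diag mxE de => /eqP.
  rewrite -subr_eq0 -{2}[y 0 j']mulr1 -mulrBr mulf_eq0 => /orP[/eqP//|].
  rewrite subr_eq0 => /eqP h; exfalso.
  have : e j' = 1 by apply: (@complexI R); rewrite h rmorph1.
  by move/eqP; apply/negP; apply: uniq.
have orth : (uc *m epsc^T) 0 0 = 0.
  transitivity ((real_complex R) ((u *m eps^T) 0 0)).
    by rewrite map_trmx -map_mxM [LHS]mxE.
  by rewrite ueps mxE rmorph0.
have : \sum_j' (z j' 0)^* * (y 0 j')^* = 0.
  rewrite -[RHS]orth.
  have -> : uc *m epsc^T = (uc *m U^t*) *m (U *m epsc^T).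
    by rewrite mulmxA -(mulmxA uc) UtU mulmx1.
  rewrite [RHS]mxE; apply: eq_bigr => j' _; rewrite uUt; congr (_ * _).
  rewrite !mxE rmorph_sum; apply: eq_bigr => x _.
  by rewrite !mxE rmorphM /= conjCK rc_conj mulrC.
rewrite (bigD1 j) //= big1 ?addr0; last first.
  by move=> j' ne; rewrite yj // conjC0 mulr0.
move/eqP; rewrite mulf_eq0 !conjC_eq0 => /orP[/eqP zj0|/eqP yj0].
  by rewrite /w zj0 mul0r.
exfalso.
have y0 : y = 0.
  apply/rowP => j'; rewrite [RHS]mxE; case: (eqVneq j' j) => [->|ne]; first exact: yj0.
  exact: yj.
have : epsc = 0 by rewrite -[epsc]mulmx1 -UtU mulmxA -/y y0 mul0mx.
by move/eqP; rewrite map_mx_eq0 (negbTE eps0).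
Qed.

End ComplexPart.

Set Implicit Arguments.
Unset Strict Implicit.

Definition Tv (R : realType) n (T : 'M[R]_n) (v : 'I_n -> R) : 'I_n -> R :=
  fun x => \sum_y T x y * v y.
Definition pw (R : realType) n (T : 'M[R]_n) k (v : 'I_n -> R) := iter k (Tv T) v.
Definition KN (R : realType) n (T : 'M[R]_n) N (x : 'I_n) (g : seq 'I_n -> R) :=
  \sum_(t : N.-tuple 'I_n) chain_weight T x t * g t.

Lemma sum_tupleS (R : realType) n N (F : N.+1.-tuple 'I_n -> R) :
  \sum_t F t = \sum_x \sum_(t : N.-tuple 'I_n) F [tuple of x :: t].
Proof.
rewrite pair_big /=.
rewrite (reindex (fun p : 'I_n * N.-tuple 'I_n => [tuple of p.1 :: p.2])) /=.
  by apply: eq_bigr => -[x t].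
exists (fun t : N.+1.-tuple 'I_n => (thead t, [tuple of behead t])).
  move=> [x t] _ /=; rewrite theadE; congr pair; exact: val_inj.
by move=> t _ /=; rewrite -tuple_eta.
Qed.

Lemma sum_tuple0 (R : realType) n (F : 0.-tuple 'I_n -> R) :
  \sum_t F t = F [tuple].
Proof. by rewrite (big_pred1 [tuple]) // => t; apply/esym/eqP; exact: tuple0. Qed.

Lemma KN0 (R : realType) n (T : 'M[R]_n) x g : KN T 0 x g = g [::].
Proof. by rewrite /KN sum_tuple0 /= mul1r. Qed.

Lemma KNS (R : realType) n (T : 'M[R]_n) N x g :
  KN T N.+1 x g = \sum_y T x y * KN T N y (fun t => g (y :: t)).
Proof.
rewrite /KN sum_tupleS; apply: eq_bigr => y _.
by rewrite mulr_sumr; apply: eq_bigr => t _ /=; rewrite mulrA.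
Qed.

Lemma expectS (R : realType) n (pi : 'I_n -> R) (T : 'M[R]_n) N g :
  expect pi T N.+1 g = \sum_y pi y * KN T N y (fun t => g (y :: t)).
Proof.
rewrite /expect sum_tupleS; apply: eq_bigr => y _.
by rewrite /KN mulr_sumr; apply: eq_bigr => t _ /=; rewrite mulrA.
Qed.

Lemma expect_stat (R : realType) n (pi : 'I_n -> R) (T : 'M[R]_n) N g :
  \sum_x pi x = 1 -> (forall y, \sum_x pi x * T x y = pi y) ->
  expect pi T N g = \sum_x pi x * KN T N x g.
Proof.
move=> s1 st; case: N => [|N].
  rewrite /expect sum_tuple0 /= mul1r.
  by under eq_bigr do rewrite KN0; rewrite -mulr_suml s1 mul1r.
rewrite expectS.
under [RHS]eq_bigr do rewrite KNS mulr_sumr.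
rewrite exchange_big /=; apply: eq_bigr => y _.
by rewrite -st mulr_suml; apply: eq_bigr => x _; rewrite mulrA.
Qed.

Lemma KN_const (R : realType) n (T : 'M[R]_n) N x c :
  (forall x, \sum_y T x y = 1) -> KN T N x (fun _ => c) = c.
Proof.
move=> st; elim: N x => [|N IH] x; first by rewrite KN0.
by rewrite KNS; under eq_bigr do rewrite IH; rewrite -mulr_suml st mul1r.
Qed.

Lemma KN_add (R : realType) n (T : 'M[R]_n) N x g h :
  KN T N x (fun t => g t + h t) = KN T N x g + KN T N x h.
Proof. by rewrite /KN -big_split; apply: eq_bigr => t _; rewrite mulrDr. Qed.

Lemma KN_scale (R : realType) n (T : 'M[R]_n) N x c g :
  KN T N x (fun t => c * g t) = c * KN T N x g.
Proof. by rewrite /KN mulr_sumr; apply: eq_bigr => t _; rewrite mulrCA. Qed.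

Lemma Tv_add (R : realType) n (T : 'M[R]_n) v1 v2 x :
  Tv T (fun y => v1 y + v2 y) x = Tv T v1 x + Tv T v2 x.
Proof. by rewrite /Tv -big_split; apply: eq_bigr => y _; rewrite mulrDr. Qed.

Lemma Tv_sum (R : realType) n (T : 'M[R]_n) N (F : 'I_N -> 'I_n -> R) x :
  Tv T (fun y => \sum_k F k y) x = \sum_k Tv T (F k) x.
Proof.
rewrite /Tv exchange_big /=; apply: eq_bigr => y _; by rewrite mulr_sumr.
Qed.

Lemma KN_ext (R : realType) n (T : 'M[R]_n) N x g h :
  (forall t, g t = h t) -> KN T N x g = KN T N x h.
Proof. by move=> gh; apply: eq_bigr => t _; rewrite gh. Qed.

Lemma KN_S1 (R : realType) n (T : 'M[R]_n) N f x :
  (forall x, \sum_y T x y = 1) ->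
  KN T N x (partial_sum f) = \sum_(k < N) pw T k.+1 f x.
Proof.
move=> rs; elim: N x => [|N IH] x.
  by rewrite KN0 /partial_sum big_nil big_ord0.
rewrite KNS.
under eq_bigr => y _.
  rewrite (@KN_ext _ _ _ _ _ _ (fun t => f y + partial_sum f t)); last first.
    by move=> t; rewrite /partial_sum big_cons.
  rewrite KN_add KN_const // IH.
  over.
rewrite -/(Tv T (fun y => f y + \sum_(k < N) pw T k.+1 f y) x) Tv_add Tv_sum.
by rewrite big_ord_recl.
Qed.

Lemma pi_Tv (R : realType) n (pi : 'I_n -> R) (T : 'M[R]_n) v :
  (forall y, \sum_x pi x * T x y = pi y) ->
  \sum_x pi x * Tv T v x = \sum_x pi x * v x.
Proof.
move=> st; rewrite /Tv.
under eq_bigr do rewrite mulr_sumr.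
rewrite exchange_big /=; apply: eq_bigr => y _.
by rewrite -st mulr_suml; apply: eq_bigr => x _; rewrite mulrA.
Qed.

Lemma pi_pw (R : realType) n (pi : 'I_n -> R) (T : 'M[R]_n) k v :
  (forall y, \sum_x pi x * T x y = pi y) ->
  \sum_x pi x * pw T k v x = \sum_x pi x * v x.
Proof.
move=> st; elim: k => [|k IH] //=.
by rewrite /pw /= pi_Tv.
Qed.

Lemma E1 (R : realType) n (pi : 'I_n -> R) (T : 'M[R]_n) N f :
  \sum_x pi x = 1 -> (forall y, \sum_x pi x * T x y = pi y) ->
  (forall x, \sum_y T x y = 1) ->
  expect pi T N (partial_sum f) = N%:R * \sum_x pi x * f x.
Proof.
move=> s1 st rs; rewrite expect_stat //.
under eq_bigr do rewrite KN_S1 // mulr_sumr.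
rewrite exchange_big /=.
under eq_bigr do rewrite pi_Tv // pi_pw //.
by rewrite sumr_const card_ord mulr_natl.
Qed.

Lemma E2S (R : realType) n (pi : 'I_n -> R) (T : 'M[R]_n) N f :
  \sum_x pi x = 1 -> (forall y, \sum_x pi x * T x y = pi y) ->
  (forall x, \sum_y T x y = 1) ->
  expect pi T N.+1 (fun s => partial_sum f s ^+ 2) =
  \sum_y pi y * f y ^+ 2 + 2 * \sum_(k < N) \sum_y pi y * f y * pw T k.+1 f y
  + expect pi T N (fun s => partial_sum f s ^+ 2).
Proof.
move=> s1 st rs; rewrite expectS [in RHS](expect_stat _ _ s1 st).
under eq_bigr => y _.
  rewrite (@KN_ext _ _ _ _ _ _ (fun t => f y ^+ 2 + (2 * f y * partial_sum f t
       + partial_sum f t ^+ 2))); last first.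
    by move=> t; rewrite /partial_sum big_cons; ring.
  rewrite KN_add KN_const // KN_add KN_scale KN_S1 //.
  over.
rewrite /=.
under eq_bigr do rewrite !mulrDr.
rewrite [LHS]big_split [X in _ + X = _]big_split /= addrA; congr (_ + _ + _).
rewrite exchange_big /= mulr_sumr; apply: eq_bigr => y _.
rewrite !mulr_sumr; apply: eq_bigr => k _; ring.
Qed.

Definition mu (R : realType) n (pi : 'I_n -> R) (f : 'I_n -> R) := \sum_x pi x * f x.
Definition ak (R : realType) n (pi : 'I_n -> R) (T : 'M[R]_n) f k :=
  \sum_x pi x * f x * pw T k f x - (mu pi f) ^+ 2.

Lemma var0 (R : realType) n (pi : 'I_n -> R) (T : 'M[R]_n) f :
  var_sum pi T f 0 = 0.
Proof.
by rewrite /var_sum /expect !sum_tuple0 /= !mul1r subrr.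
Qed.

Lemma varS (R : realType) n (pi : 'I_n -> R) (T : 'M[R]_n) N f :
  \sum_x pi x = 1 -> (forall y, \sum_x pi x * T x y = pi y) ->
  (forall x, \sum_y T x y = 1) ->
  var_sum pi T f N.+1 = var_sum pi T f N + ak pi T f 0 + 2 * \sum_(k < N) ak pi T f k.+1.
Proof.
move=> s1 st rs; rewrite /var_sum E2S // !E1 // /ak sumrB sumr_const card_ord.
have -> : \sum_y pi y * f y ^+ 2 = \sum_x pi x * f x * pw T 0 f x.
  by apply: eq_bigr => x _; rewrite /pw /= expr2 mulrA.
rewrite -/(mu pi f) -mulr_natr -natr1; ring.
Qed.

Definition VN (R : realType) N (e : R) :=
  \sum_(M < N) (1 + 2 * \sum_(k < M) e ^+ k.+1).

Lemma VN_closed (R : realType) N (e : R) :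
  (1 - e) ^+ 2 * VN N e = N%:R * (1 - e ^+ 2) - 2 * e * (1 - e ^+ N).
Proof.
elim: N => [|N IH]; first by rewrite /VN big_ord0 mulr0 expr0 subrr mulr0 mul0r subr0.
rewrite /VN big_ord_recr /= -/(VN N e) mulrDr IH.
have geo : (1 - e) * \sum_(k < N) e ^+ k.+1 = e - e ^+ N.+1.
  elim: N {IH} => [|N IHN]; first by rewrite big_ord0 mulr0 expr1 subrr.
  by rewrite big_ord_recr /= mulrDr IHN !exprS; ring.
have -> : (1 - e) ^+ 2 * (1 + 2 * \sum_(k < N) e ^+ k.+1) =
   (1 - e) ^+ 2 + 2 * (1 - e) * ((1 - e) * \sum_(k < N) e ^+ k.+1) by ring.
have -> : (N.+1)%:R = N%:R + 1 :> R by rewrite natr1.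
rewrite geo !exprS; ring.
Qed.

Lemma var_formula (R : realType) n (pi : 'I_n -> R) (T : 'M[R]_n) f m
    (w e : 'I_m -> R) :
  \sum_x pi x = 1 -> (forall y, \sum_x pi x * T x y = pi y) ->
  (forall x, \sum_y T x y = 1) ->
  (forall k, ak pi T f k = \sum_j w j * e j ^+ k) ->
  forall N, var_sum pi T f N = \sum_j w j * VN N (e j).
Proof.
move=> s1 st rs akE; elim => [|N IH].
  by rewrite var0 big1 // => j _; rewrite /VN big_ord0 mulr0.
rewrite varS // IH akE.
rewrite (eq_bigr (fun k : 'I_N => \sum_j w j * e j ^+ k.+1)); last first.
  by move=> k _; rewrite akE.
rewrite exchange_big /= mulr_sumr -!big_split /=; apply: eq_bigr => j _.
rewrite /VN big_ord_recr /= expr0 mulr1 mulrDr mulr_sumr.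
rewrite [w j * (1 + _)]mulrDr mulr1 mulr_sumr mulr_sumr -addrA; congr (_ + (_ + _)).
by rewrite mulr_sumr; apply: eq_bigr => k _; ring.
Qed.

Lemma var_iid (R : realType) n (pi : 'I_n -> R) f :
  \sum_x pi x = 1 ->
  forall N, var_sum pi (iid_matrix pi) f N = N%:R * ak pi (iid_matrix pi) f 0.
Proof.
move=> s1.
have st : forall y, \sum_x pi x * iid_matrix pi x y = pi y.
  by move=> y; under eq_bigr do rewrite mxE; rewrite -mulr_suml s1 mul1r.
have rs : forall x, \sum_y iid_matrix pi x y = 1.
  by move=> x; under eq_bigr do rewrite mxE.
have ak0 : forall k, ak pi (iid_matrix pi) f k.+1 = 0.
  move=> k; rewrite /ak.
  have H : forall x, pw (iid_matrix pi) k.+1 f x = mu pi f.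
    move=> x; rewrite /pw /= /Tv.
    under eq_bigr do rewrite mxE.
    exact: (pi_pw k f st).
  rewrite (eq_bigr (fun x => pi x * f x * mu pi f)); last by move=> x _; rewrite H.
  by rewrite -mulr_suml -/(mu pi f) expr2 subrr.
elim=> [|N IH]; first by rewrite var0 mul0r.
rewrite varS // IH big1; last by move=> k _; exact: ak0.
by rewrite mulr0 addr0 -natr1 mulrDl mul1r.
Qed.

Section LimitPart.
Local Open Scope classical_set_scope.
Lemma VN_bound (R : realType) N (e : R) : -1 <= e <= 0 -> (0 < N)%N ->
  `|(1 + e) / (1 - e) - VN N e / N%:R| <= 4 / N%:R.
Proof.
move=> /andP[e1 e0] N0.
have q0 : 0 < 1 - e by lra.
have q1 : 1 <= (1 - e) ^+ 2.
  rewrite expr2; have h : 1 <= 1 - e by lra.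
  by rewrite -[X in X <= _]mulr1 ler_pM.
have N0' : 0 < N%:R :> R by rewrite ltr0n.
have VNe : VN N e = (N%:R * (1 - e ^+ 2) - 2 * e * (1 - e ^+ N)) / (1 - e) ^+ 2.
  by rewrite -VN_closed mulrC mulKf // expf_neq0 // gt_eqF.
have -> : (1 + e) / (1 - e) - VN N e / N%:R
   = (2 * e * (1 - e ^+ N)) / ((1 - e) ^+ 2 * N%:R).
  rewrite VNe; field.
  by rewrite gt_eqF // gt_eqF.
have cb : `|2 * e * (1 - e ^+ N)| <= 4.
  rewrite !normrM.
  have h1 : `|e| <= 1 by rewrite ler_norml; lra.
  have h2 : `|1 - e ^+ N| <= 2.
    apply: le_trans (ler_normB _ _) _.
    rewrite normr1 normrX.
    have : `|e| ^+ N <= 1 by rewrite exprn_ile1.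
    lra.
  have h3 : `|2 : R| = 2 by rewrite ger0_norm.
  rewrite h3.
  have h4 : 0 <= `|e| by [].
  have h5 : 0 <= `|1 - e ^+ N| by [].
  nra.
rewrite normrM normfV [`|(1 - e) ^+ 2 * _|]ger0_norm; last by apply: mulr_ge0; [exact: sqr_ge0 | exact: ler0n].
rewrite ler_pdivrMr; last by rewrite mulr_gt0 // (lt_le_trans ltr01 q1).
have -> : 4 / N%:R * ((1 - e) ^+ 2 * N%:R) = 4 * (1 - e) ^+ 2 :> R.
  by field; rewrite gt_eqF.
apply: le_trans cb _.
by rewrite -[X in X <= _]mulr1 ler_wpM2l.
Qed.

Lemma limit_part (R : realType) m (w e : 'I_m -> R) (v : nat -> R) :
  (forall j, 0 <= w j) -> (forall j, -1 <= e j <= 0) ->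
  (forall N, v N = \sum_j w j * VN N (e j)) ->
  exists L : R, (fun N : nat => v N / N%:R) @ \oo --> L /\ L <= \sum_j w j.
Proof.
move=> w0 e01 vE.
exists (\sum_j w j * ((1 + e j) / (1 - e j))); split; last first.
  apply: ler_sum => j _; rewrite -[X in _ <= X]mulr1 ler_wpM2l //.
  have /andP[e1 e0] := e01 j.
  by rewrite ler_pdivrMr ?mul1r; lra.
apply/cvgrPdist_le => eps eps0.
pose C := \sum_j w j * 4.
have C0 : 0 <= C by apply: sumr_ge0 => j _; rewrite mulr_ge0.
near=> N.
have N0 : (0 < N)%N by near: N; exact: nbhs_infty_gt.
have NK : (Num.Def.archi_bound (C / eps) < N)%N by near: N; exact: nbhs_infty_gt.
have N0' : 0 < N%:R :> R by rewrite ltr0n.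
rewrite vE mulr_suml -sumrB.
apply: le_trans (ler_norm_sum _ _ _) _.
apply: (@le_trans _ _ (\sum_j w j * (4 / N%:R))).
  apply: ler_sum => j _; rewrite -mulrA -mulrBr normrM ger0_norm //.
  by apply: ler_wpM2l => //; apply: VN_bound.
have -> : \sum_j w j * (4 / N%:R) = C / N%:R by rewrite /C mulr_suml; apply: eq_bigr => j _; rewrite mulrA.
rewrite ler_pdivrMr //.
have := archi_boundP (divr_ge0 C0 (ltW eps0)).
rewrite ltr_pdivrMr // => h.
apply: le_trans (ltW h) _.
by rewrite mulrC ler_wpM2l ?ltW // ltr_nat.
Unshelve. all: by end_near.
Qed.
End LimitPart.

Lemma pw_mx (R : realType) n (T : 'M[R]_n) k v x :
  pw T k v x = \sum_y (T ^+ k) x y * v y.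
Proof.
elim: k x => [|k IH] x.
  rewrite /pw /= expr0 (bigD1 x) //= big1 ?addr0; first by rewrite mxE eqxx mul1r.
  by move=> y yx; rewrite mxE eq_sym (negbTE yx) mul0r.
rewrite /pw /= -/(pw T k v) /Tv exprS -mulmxE.
rewrite (eq_bigr (fun y => \sum_z T x y * ((T ^+ k) y z * v z))); last first.
  by move=> y _; rewrite IH mulr_sumr.
rewrite exchange_big /=; apply: eq_bigr => z _.
by rewrite mxE mulr_suml; apply: eq_bigr => y _; rewrite mulrA.
Qed.

Lemma pw_shift (R : realType) n (T : 'M[R]_n) k v c x :
  (forall x, \sum_y T x y = 1) ->
  pw T k (fun y => v y - c) x = pw T k v x - c.
Proof.
move=> rs; elim: k x => [|k IH] x //.
rewrite /pw /= -!/(pw T k _) /Tv.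
under eq_bigr do rewrite IH mulrBr.
by rewrite sumrB -mulr_suml rs mul1r.
Qed.

Lemma ak_center (R : realType) n (pi : 'I_n -> R) (T : 'M[R]_n) f k :
  \sum_x pi x = 1 -> (forall y, \sum_x pi x * T x y = pi y) ->
  (forall x, \sum_y T x y = 1) ->
  ak pi T f k = \sum_x pi x * (f x - mu pi f) * pw T k (fun y => f y - mu pi f) x.
Proof.
move=> s1 st rs.
rewrite (eq_bigr (fun x => pi x * f x * pw T k f x - mu pi f * (pi x * pw T k f x)
   - mu pi f * (pi x * f x) + mu pi f ^+ 2 * pi x)); last first.
  by move=> x _; rewrite pw_shift //; ring.
rewrite big_split /= !sumrB -!mulr_sumr -/(mu pi f) (@pi_pw _ _ pi T k f st) -/(mu pi f).
rewrite /ak s1; ring.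
Qed.

Lemma eig_ge (R : realType) n (P : 'M[R]_n) (a : R) :
  stochastic P -> eigenvalue P a -> -1 <= a.
Proof.
move=> [P0 rs] /eigenvalueP [v vP v0].
have E : forall y, `|a| * `|v 0 y| = `|\sum_x v 0 x * P x y|.
  move=> y; have := congr1 (fun M : 'rV[R]_n => M 0 y) vP.
  by rewrite !mxE => ->; rewrite normrM.
have key : `|a| * \sum_y `|v 0 y| <= \sum_x `|v 0 x|.
  rewrite mulr_sumr.
  rewrite (eq_bigr (fun y => `|\sum_x v 0 x * P x y|)); last by move=> y _; rewrite E.
  apply: (@le_trans _ _ (\sum_y \sum_x `|v 0 x| * P x y)).
    apply: ler_sum => y _; apply: le_trans (ler_norm_sum _ _ _) _.
    by apply: ler_sum => x _; rewrite normrM (ger0_norm (P0 x y)).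
  rewrite exchange_big /=; apply: ler_sum => x _.
  by rewrite -mulr_sumr rs mulr1.
have pos : 0 < \sum_x `|v 0 x|.
  rewrite lt_def sumr_ge0 // andbT; apply/negP => /eqP /psumr_eq0P h.
  move/negP: v0; apply; apply/eqP/rowP => x; rewrite mxE.
  by apply/eqP; rewrite -normr_eq0; apply/eqP; apply: h.
have : `|a| <= 1.
  by move: key; rewrite -{2}[\sum_x _]mul1r ler_pM2r.
by rewrite ler_norml => /andP[].
Qed.

Unset Implicit Arguments.

Theorem corollary1 (R : realType) (n : nat) (pi : 'I_n -> R) (P : 'M[R]_n) :
  prob_dist pi -> stochastic P -> reversible pi P -> irreducible P ->
  (exists lam : 'I_n -> R, eigen_spectrum P lam /\
     exists i1 : 'I_n, lam i1 = 1 /\ (forall i, i != i1 -> lam i <= 0)) ->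
  eff_dominates pi P (iid_matrix pi).
Proof.
move=> [pipos s1] [P0 rs] rev irr [lam [cpP [i1 [l1 lneg]]]].
rewrite /eigen_spectrum in cpP.
have st : forall y, \sum_x pi x * P x y = pi y.
  move=> y; rewrite (eq_bigr (fun x => pi y * P y x)); last by move=> x _; rewrite rev.
  by rewrite -mulr_sumr rs mulr1.
move=> f.
pose m := mu pi f.
pose g := fun x => f x - m.
have [sq [sq0 sq2]] : exists sq : 'I_n -> R, (forall x, 0 < sq x) /\ (forall x, sq x * sq x = pi x).
  exists (fun x => Num.sqrt (pi x)); split => x; first by rewrite sqrtr_gt0.
  by rewrite -expr2 sqr_sqrtr // ltW.
pose Dm := diag_mx (\row_x sq x) : 'M[R]_n.
pose Di := diag_mx (\row_x (sq x)^-1) : 'M[R]_n.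
have DmDi : Dm *m Di = 1%:M.
  rewrite mulmx_diag; apply/matrixP => i j; rewrite !mxE mulfV // (gt_eqF (sq0 i)) //.
have DiDm : Di *m Dm = 1%:M := mulmx1C DmDi.
have ME : forall (A : 'M[R]_n) x y, (Dm *m A *m Di) x y = sq x * A x y / sq y.
  by move=> A x y; rewrite mul_mx_diag mxE mul_diag_mx !mxE.
have [S SE] : {S : 'M[R]_n | S = Dm *m P *m Di} by exists (Dm *m P *m Di).
have Sxy : forall x y, S x y = sq x * P x y / sq y by move=> x y; rewrite SE ME.
have Ssym : S^T = S.
  apply/matrixP => x y; rewrite mxE !Sxy.
  have nz : sq x * sq y != 0 by rewrite mulf_neq0 ?gt_eqF.
  apply: (mulIf nz).
  have -> : sq y * P y x / sq x * (sq x * sq y) = (sq y * sq y) * P y x.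
    by field; rewrite gt_eqF.
  have -> : sq x * P x y / sq y * (sq x * sq y) = (sq x * sq x) * P x y.
    by field; rewrite gt_eqF.
  by rewrite !sq2 rev.
pose eps := \row_x sq x : 'rV[R]_n.
have epsS : eps *m S = eps.
  apply/rowP => y; rewrite !mxE.
  rewrite (eq_bigr (fun x => pi x * P x y / sq y)); last first.
    by move=> x _; rewrite !mxE Sxy -sq2; field; rewrite gt_eqF.
  by rewrite -mulr_suml st -sq2 mulfK // gt_eqF.
have eps0 : eps != 0.
  apply/negP => /eqP h.
  have : \sum_x pi x = 0.
    apply: big1 => x _; have := congr1 (fun M : 'rV[R]_n => M 0 x) h.
    by rewrite !mxE -sq2 => ->; rewrite mul0r.
  by rewrite s1 => /eqP; rewrite oner_eq0.
pose u := \row_x (sq x * g x) : 'rV[R]_n.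
have ueps : u *m eps^T = 0.
  apply/matrixP => i j; rewrite !ord1 !mxE.
  rewrite (eq_bigr (fun x => pi x * f x - m * pi x)); last first.
    by move=> x _; rewrite !mxE /g -sq2; ring.
  by rewrite sumrB -mulr_sumr s1 mulr1 subrr.
have [w [e [w0 cpS kE one]]] := @sym_decomp R n S u eps Ssym epsS eps0 ueps.
have Spow : forall k, S ^+ k = Dm *m P ^+ k *m Di.
  elim => [|k IH]; first by rewrite !expr0 mulmx1 DmDi.
  rewrite exprS -mulmxE IH SE [in RHS]exprS -[in RHS]mulmxE !mulmxA.
  by rewrite -(mulmxA (Dm *m P) Di Dm) DiDm mulmx1.
have akS : forall k, ak pi P f k = (u *m S ^+ k *m u^T) 0 0.
  move=> k; rewrite ak_center // Spow.
  move: (Dm *m P ^+ k *m Di) (ME (P ^+ k)) => M MEk.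
  transitivity (\sum_x \sum_y pi x * g x * ((P ^+ k) x y * g y)).
    by apply: eq_bigr => x _; rewrite pw_mx mulr_sumr.
  rewrite [RHS]mxE.
  rewrite [RHS](eq_bigr (fun y => \sum_x (sq x * g x * M x y) * (sq y * g y))); last first.
    by move=> y _; rewrite !mxE mulr_suml; apply: eq_bigr => x _; rewrite !mxE.
  rewrite [RHS]exchange_big /=; apply: eq_bigr => x _; apply: eq_bigr => y _.
  by rewrite MEk -sq2; field; rewrite gt_eqF.
have cpPS : \prod_j ('X - (e j)%:P) = \prod_i ('X - (lam i)%:P).
  by rewrite -cpS -cpP SE (char_poly_sim _ _ P Dm Di DmDi).
have root_e : forall j, exists i, e j = lam i.
  move=> j; have := congr1 (fun p => p.[e j]) cpPS.
  rewrite /= !horner_prod (bigD1 j) //= hornerXsubC subrr mul0r.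
  move/esym/eqP/prodf_eq0 => [i _]; rewrite hornerXsubC subr_eq0 => /eqP ->.
  by exists i.
have lam_ge : forall i, -1 <= lam i.
  move=> i; apply: (@eig_ge R n P); first by split.
  rewrite eigenvalue_root_char cpP /root horner_prod (bigD1 i) //=.
  by rewrite hornerXsubC subrr mul0r.
have uniq1 : forall j j', e j = 1 -> e j' = 1 -> j = j'.
  move=> j j' ej ej'; apply/eqP; apply/negPn/negP => ne.
  have H := cpPS.
  rewrite (bigD1 j) //= [in RHS](bigD1 i1) //= ej l1 in H.
  have {}H := mulfI (monic_neq0 (monicXsubC 1)) H.
  have := congr1 (fun p => p.[1]) H.
  rewrite /= !horner_prod (bigD1 j') /=; last by rewrite eq_sym.
  rewrite hornerXsubC ej' subrr mul0r => /esym/eqP; apply/negP.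
  rewrite gt_eqF // prodr_gt0 // => i ii1.
  rewrite hornerXsubC subr_gt0; have := lneg i ii1; lra.
pose e' j := if e j == 1 then 0 else e j.
have kE' : forall k, ak pi P f k = \sum_j w j * e' j ^+ k.
  move=> k; rewrite akS kE; apply: eq_bigr => j _; rewrite /e'; case: eqP => // ej.
  rewrite (one j ej) ?mul0r // => j' ne; apply/eqP => ej'.
  by move: ne; rewrite (uniq1 _ _ ej' ej) eqxx.
have e'01 : forall j, -1 <= e' j <= 0.
  move=> j; rewrite /e'; case: eqP => [_|ne]; first by rewrite lerN10 lexx.
  have [i ei] := root_e j.
  have ii1 : i != i1 by apply/eqP => ii; apply: ne; rewrite ei ii l1.
  by rewrite ei lam_ge lneg.
have [L [LP Lle]] := @limit_part R n w e' (fun N => var_sum pi P f N) w0 e'01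
   (@var_formula R n pi P f n w e' s1 st rs kE').
exists L, (ak pi P f 0); split => //.
  rewrite /has_asymp_var; apply: cvg_near_cst; near=> N.
  have N0 : (0 < N)%N by near: N; exact: nbhs_infty_gt.
  rewrite (@var_iid R n pi f s1 N).
  have -> : ak pi (iid_matrix pi) f 0 = ak pi P f 0 by [].
  by rewrite mulrAC divff ?mul1r // pnatr_eq0 -lt0n.
by rewrite kE'; under eq_bigr do rewrite expr0 mulr1.
Unshelve. all: by end_near.
Qed.
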